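(* Let $(A,\cdot,\alpha_A)$ and $(B,\circ,\alpha_B)$ be nearly Hom-associative algebras over a field $\mathbb{K}$ of characteristic $0$. Suppose there are linear maps $l_A,r_A:A\to\mathrm{End}(B)$ and $l_B,r_B:B\to\mathrm{End}(A)$ such that $(l_A,r_A,B,\alpha_B)$ is a bimodule of $(A,\cdot,\alpha_A)$, $(l_B,r_B,A,\alpha_A)$ is a bimodule of $(B,\circ,\alpha_B)$, and for all $x,y\in A$, $a,b\in B$: \begin{align*} &\alpha_A(x)\cdot(r_B(a)y)+r_B(l_A(y)a)\alpha_A(x)-(l_B(a)x)\cdot\alpha_A(y)-l_B(r_A(x)a)\alpha_A(y)=0,\\ &\alpha_A(x)\cdot(l_B(a)y)+r_B(r_A(y)a)\alpha_A(x)-r_B(\alpha_B(a))(y\cdot x)=0,\\ &l_B(\alpha_B(a))(x\cdot y)-(r_B(a)y)\cdot\alpha_A(x)-l_B(l_A(y)a)\alpha_A(x)=0,\\ &\alpha_B(a)\circ(r_A(x)b)+r_A(l_B(b)x)\alpha_B(a)-(l_A(x)a)\circ\alpha_B(b)-l_A(r_B(a)x)\alpha_B(b)=0,\\ &\alpha_B(a)\circ(l_A(x)b)+r_A(r_B(b)x)\alpha_B(a)-r_A(\alpha_A(x))(b\circ a)=0,\\ &l_A(\alpha_A(x))(b\circ a)-(r_A(x)a)\circ\alpha_B(b)-l_A(l_B(a)x)\alpha_B(b)=0. \end{align*} Then, with the product $(x+a)\ast(y+b)=(x\cdot y+l_B(a)y+r_B(b)x)+(a\circ b+l_A(x)b+r_A(y)a)$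 on $A\oplus B$, the triple $(A\oplus B,\ast,\alpha_A\oplus\alpha_B)$ is a nearly Hom-associative algebra.
   Context: A nearly Hom-associative algebra is a triple $(A,\cdot,\alpha)$ with bilinear product $\cdot$ and linear $\alpha:A\to A$ such that $\alpha(x)\cdot(y\cdot z)=(z\cdot x)\cdot\alpha(y)$ for all $x,y,z$. A bimodule of $(A,\cdot,\alpha)$ is a quadruple $(l,r,V,\varphi)$ with $V$ a linear space, $l,r:A\to\mathrm{End}(V)$ linear and $\varphi\in\mathrm{End}(V)$ such that for all $x,y\in A$: $\varphi\circ l(x)=l(\alpha(x))\circ\varphi$, $\varphi\circ r(x)=r(\alpha(x))\circ\varphi$, $l(\alpha(x))\circ l(y)=r(\alpha(y))\circ r(x)$, $l(\alpha(x))\circ r(y)=l(y\cdot x)\circ\varphi$, $r(\alpha(x))\circ l(y)=r(x\cdot y)\circ\varphi$. $(\alpha_A\oplus\alpha_B)(x+a)=\alpha_A(x)+\alpha_B(a)$. *)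

(* Defs.v *)
From HB Require Import structures.
From mathcomp Require Import all_boot all_order all_algebra.
Set Implicit Arguments. Unset Strict Implicit. Unset Printing Implicit Defensive.
Import GRing.Theory.
Local Open Scope ring_scope.

Section Defs.
Variable K : fieldType.

Definition is_linear (U V : lmodType K) (f : U -> V) : Prop :=
  forall (k : K) (u v : U), f (k *: u + v) = k *: f u + f v.

Definition is_bilinear (U V W : lmodType K) (f : U -> V -> W) : Prop :=
  (forall v : V, is_linear (fun u => f u v)) /\ (forall u : U, is_linear (f u)).

Definition nearly_hom_assoc (A : lmodType K) (mul : A -> A -> A) (alpha : A -> A)
  : Prop :=
  [/\ is_bilinear mul, is_linear alpha &
      forall x y z : A, mul (alpha x) (mul y z) = mul (mul z x) (alpha y)].

(* (l, r, V, phi) is a bimodule of (A, mul, alpha); l, r : A -> End(V) are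
   linear maps into the linear endomorphisms of V, i.e. bilinear maps
   A -> V -> V, and phi is a linear endomorphism of V. *)
Definition is_bimodule (A V : lmodType K) (mul : A -> A -> A) (alpha : A -> A)
  (l r : A -> V -> V) (phi : V -> V) : Prop :=
  [/\ is_bilinear l, is_bilinear r & is_linear phi] /\
  [/\ forall x v, phi (l x v) = l (alpha x) (phi v),
      forall x v, phi (r x v) = r (alpha x) (phi v),
      forall x y v, l (alpha x) (l y v) = r (alpha y) (r x v),
      forall x y v, l (alpha x) (r y v) = l (mul y x) (phi v) &
      forall x y v, r (alpha x) (l y v) = r (mul x y) (phi v)].

Definition sum_mul (A B : lmodType K) (mulA : A -> A -> A) (mulB : B -> B -> B)
  (lA rA : A -> B -> B) (lB rB : B -> A -> A) (p q : A * B) : A * B :=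
  (mulA p.1 q.1 + lB p.2 q.1 + rB q.2 p.1,
   mulB p.2 q.2 + lA p.1 q.2 + rA q.1 p.2).

Definition sum_map (A B : lmodType K) (alphaA : A -> A) (alphaB : B -> B)
  (p : A * B) : A * B := (alphaA p.1, alphaB p.2).

End Defs.

(* Main.v *)
Require Import Defs.
From HB Require Import structures.
From mathcomp Require Import all_boot all_order all_algebra.
Import GRing.Theory.
Local Open Scope ring_scope.

Lemma lin_add (K : fieldType) (U V : lmodType K) (f : U -> V) :
  is_linear f -> forall u v, f (u + v) = f u + f v.
Proof. by move=> H u v; rewrite -{1}[u]scale1r H scale1r. Qed.

Ltac perm_sum :=
  repeat match goal with
  | |- ?t + _ = _ =>
      rewrite ?(addrC _ t) ?(addrCA _ t); congr (t + _)
  end.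

Theorem mainTheorem13 (K : fieldType) (hK : [pchar K] =i pred0)
  (A B : lmodType K) (mulA : A -> A -> A) (alphaA : A -> A)
  (mulB : B -> B -> B) (alphaB : B -> B)
  (lA rA : A -> B -> B) (lB rB : B -> A -> A) :
  nearly_hom_assoc mulA alphaA ->
  nearly_hom_assoc mulB alphaB ->
  is_bimodule mulA alphaA lA rA alphaB ->
  is_bimodule mulB alphaB lB rB alphaA ->
  (forall (x y : A) (a : B),
     mulA (alphaA x) (rB a y) + rB (lA y a) (alphaA x)
     - mulA (lB a x) (alphaA y) - lB (rA x a) (alphaA y) = 0) ->
  (forall (x y : A) (a : B),
     mulA (alphaA x) (lB a y) + rB (rA y a) (alphaA x)
     - rB (alphaB a) (mulA y x) = 0) ->
  (forall (x y : A) (a : B),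
     lB (alphaB a) (mulA x y) - mulA (rB a y) (alphaA x)
     - lB (lA y a) (alphaA x) = 0) ->
  (forall (x : A) (a b : B),
     mulB (alphaB a) (rA x b) + rA (lB b x) (alphaB a)
     - mulB (lA x a) (alphaB b) - lA (rB a x) (alphaB b) = 0) ->
  (forall (x : A) (a b : B),
     mulB (alphaB a) (lA x b) + rA (rB b x) (alphaB a)
     - rA (alphaA x) (mulB b a) = 0) ->
  (forall (x : A) (a b : B),
     lA (alphaA x) (mulB b a) - mulB (rA x a) (alphaB b)
     - lA (lB a x) (alphaB b) = 0) ->
  nearly_hom_assoc (sum_mul mulA mulB lA rA lB rB) (sum_map alphaA alphaB).
Proof.
move=> [[mA1 mA2] aAl asA] [[mB1 mB2] aBl asB].
move=> [[[lA1 lA2] [rA1 rA2] _] [_ _ bA3 bA4 bA5]].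
move=> [[[lB1 lB2] [rB1 rB2] _] [_ _ bB3 bB4 bB5]].
move=> H1 H2 H3 H4 H5 H6.
have mAl u v w : mulA (u + v) w = mulA u w + mulA v w by have := @lin_add _ _ _ _ (mA1 w) u v.
have mAr u v w : mulA w (u + v) = mulA w u + mulA w v by have := @lin_add _ _ _ _ (mA2 w) u v.
have mBl u v w : mulB (u + v) w = mulB u w + mulB v w by have := @lin_add _ _ _ _ (mB1 w) u v.
have mBr u v w : mulB w (u + v) = mulB w u + mulB w v by have := @lin_add _ _ _ _ (mB2 w) u v.
have lAl u v w : lA (u + v) w = lA u w + lA v w by have := @lin_add _ _ _ _ (lA1 w) u v.
have lAr u v w : lA w (u + v) = lA w u + lA w v by have := @lin_add _ _ _ _ (lA2 w) u v.
have rAl u v w : rA (u + v) w = rA u w + rA v w by have := @lin_add _ _ _ _ (rA1 w) u v.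
have rAr u v w : rA w (u + v) = rA w u + rA w v by have := @lin_add _ _ _ _ (rA2 w) u v.
have lBl u v w : lB (u + v) w = lB u w + lB v w by have := @lin_add _ _ _ _ (lB1 w) u v.
have lBr u v w : lB w (u + v) = lB w u + lB w v by have := @lin_add _ _ _ _ (lB2 w) u v.
have rBl u v w : rB (u + v) w = rB u w + rB v w by have := @lin_add _ _ _ _ (rB1 w) u v.
have rBr u v w : rB w (u + v) = rB w u + rB w v by have := @lin_add _ _ _ _ (rB2 w) u v.
split.
- have mAs k u w v : mulA (k *: u + w) v = k *: mulA u v + mulA w v by exact: (mA1 v k u w).
  have mAt k u w v : mulA v (k *: u + w) = k *: mulA v u + mulA v w by exact: (mA2 v k u w).
  have mBs k u w v : mulB (k *: u + w) v = k *: mulB u v + mulB w v by exact: (mB1 v k u w).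
  have mBt k u w v : mulB v (k *: u + w) = k *: mulB v u + mulB v w by exact: (mB2 v k u w).
  have lAs k u w v : lA (k *: u + w) v = k *: lA u v + lA w v by exact: (lA1 v k u w).
  have lAt k u w v : lA v (k *: u + w) = k *: lA v u + lA v w by exact: (lA2 v k u w).
  have rAs k u w v : rA (k *: u + w) v = k *: rA u v + rA w v by exact: (rA1 v k u w).
  have rAt k u w v : rA v (k *: u + w) = k *: rA v u + rA v w by exact: (rA2 v k u w).
  have lBs k u w v : lB (k *: u + w) v = k *: lB u v + lB w v by exact: (lB1 v k u w).
  have lBt k u w v : lB v (k *: u + w) = k *: lB v u + lB v w by exact: (lB2 v k u w).
  have rBs k u w v : rB (k *: u + w) v = k *: rB u v + rB w v by exact: (rB1 v k u w).
  have rBt k u w v : rB v (k *: u + w) = k *: rB v u + rB v w by exact: (rB2 v k u w).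
  have e1 (a : A) (b : B) k0 : (k0 *: (a, b)).1 = k0 *: a by [].
  have e2 (a : A) (b : B) k0 : (k0 *: (a, b)).2 = k0 *: b by [].
  split => [[v1 v2]|[u1 u2]] k [p1 p2] [q1 q2]; rewrite /sum_mul /=; congr (_, _).
  1-4: rewrite ?e1 ?e2 /= ?mAs ?mAt ?mBs ?mBt ?lAs ?lAt ?rAs ?rAt ?lBs ?lBt ?rBs ?rBt.
  1-4: rewrite !scalerDr -!addrA; perm_sum.
- move=> k [x a] [y b]; rewrite /sum_map /= aAl aBl; done.
move=> [x a] [y b] [z c]; rewrite /sum_mul /sum_map /=.
congr (_, _); apply/eqP; rewrite -subr_eq0; apply/eqP.
- rewrite !mAl !mAr !lBl !lBr !rBl !rBr.
  transitivity ((mulA (alphaA x) (mulA y z) - mulA (mulA z x) (alphaA y))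
    + (mulA (alphaA x) (rB c y) + rB (lA y c) (alphaA x)
     - mulA (lB c x) (alphaA y) - lB (rA x c) (alphaA y))
    + (mulA (alphaA x) (lB b z) + rB (rA z b) (alphaA x)
     - rB (alphaB b) (mulA z x))
    + (lB (alphaB a) (mulA y z) - mulA (rB a z) (alphaA y)
     - lB (lA z a) (alphaA y))
    + (lB (alphaB a) (lB b z) - rB (alphaB b) (rB a z))
    + (lB (alphaB a) (rB c y) - lB (mulB c a) (alphaA y))
    + (rB (mulB b c) (alphaA x) - rB (alphaB b) (lB c x))).
    rewrite !opprD -!addrA; perm_sum.
  by rewrite H1 H2 H3 asA bB3 bB4 bB5 !subrr !addr0.
- rewrite !mBl !mBr !lAl !lAr !rAl !rAr.
  transitivity ((mulB (alphaB a) (mulB b c) - mulB (mulB c a) (alphaB b))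
    + (mulB (alphaB a) (rA z b) + rA (lB b z) (alphaB a)
     - mulB (lA z a) (alphaB b) - lA (rB a z) (alphaB b))
    + (mulB (alphaB a) (lA y c) + rA (rB c y) (alphaB a)
     - rA (alphaA y) (mulB c a))
    + (lA (alphaA x) (mulB b c) - mulB (rA x c) (alphaB b)
     - lA (lB c x) (alphaB b))
    + (lA (alphaA x) (lA y c) - rA (alphaA y) (rA x c))
    + (lA (alphaA x) (rA z b) - lA (mulA z x) (alphaB b))
    + (rA (mulA y z) (alphaB a) - rA (alphaA y) (lA z a))).
    rewrite !opprD -!addrA; perm_sum.
  by rewrite H4 H5 H6 asB bA3 bA4 bA5 !subrr !addr0.
Qed.
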